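(* Let $G$ be an esp-digraph. Then $\chi'_o(G)\le 7$.
   Context: An oriented $r$-arc-coloring of a digraph $G=(V,E)$ (parallel arcs allowed; the definition applies verbatim) is a map $c:E\to\{1,\dots,r\}$ such that (i) $c((u,v))\ne c((v,w))$ for every two arcs $(u,v),(v,w)\in E$, and (ii) $c((u,v))\ne c((y,z))$ for all arcs $(u,v),(v,w),(x,y),(y,z)\in E$ with $c((v,w))=c((x,y))$. The oriented chromatic index $\chi'_o(G)$ is the smallest $r$ for which such a coloring exists. Edge series-parallel (multi)digraphs (esp-digraphs) are defined recursively, each with a distinguished source and sink: (i) a digraph with two distinct vertices $u,v$ and the single arc $(u,v)$ is an esp-digraph with source $u$ and sink $v$; (ii) if $G_1,G_2$ are vertex-disjoint esp-digraphs, then the parallel composition $G_1\cup G_2$ (identify the source of $G_1$ with the source of $G_2$ and the sink of $G_1$ with the sink of $G_2$; arcs are united, possibly creating parallel arcs) is an esp-digraph with these identified source and sink, and the series composition $G_1\times G_2$ (identify the sink of $G_1$ with the source of $G_2$) is an esp-digraph with source the source of $G_1$ and sink the sink of $G_2$. *)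

(* Defs.v *)
From mathcomp Require Import all_boot.
Set Implicit Arguments. Unset Strict Implicit. Unset Printing Implicit Defensive.

(* A multidigraph is represented by its list of arcs [E : seq (nat * nat)];
   vertices are natural numbers, parallel arcs are repeated entries, and an
   arc is identified by its index in [E]. The vertex set of an esp-digraph is
   the set of endpoints of its arcs (esp-digraphs have no isolated vertices). *)
Definition arcs := seq (nat * nat).

Definition vertex_of (E : arcs) (v : nat) : bool :=
  has (fun a => (a.1 == v) || (a.2 == v)) E.

(* Vertex-disjointness of the components before identification is
   expressed (up to renaming) by requiring that the two arc lists share no
   vertex other than the identified ones. *)
Inductive esp : arcs -> nat -> nat -> Prop :=
| esp_arc u v : u <> v -> esp [:: (u, v)] u v
| esp_par E1 E2 s t : esp E1 s t -> esp E2 s t ->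
    (forall x, vertex_of E1 x -> vertex_of E2 x -> x = s \/ x = t) ->
    esp (E1 ++ E2) s t
| esp_ser E1 E2 s m t : esp E1 s m -> esp E2 m t ->
    (forall x, vertex_of E1 x -> vertex_of E2 x -> x = m) ->
    esp (E1 ++ E2) s t.

Definition arc0 : nat * nat := (0, 0).

Definition oriented_arc_coloring (E : arcs) (r : nat) (c : nat -> nat) : Prop :=
  (forall i, i < size E -> 1 <= c i <= r) /\
  (forall i j, i < size E -> j < size E ->
     (nth arc0 E i).2 = (nth arc0 E j).1 -> c i <> c j) /\
  (forall i j k l, i < size E -> j < size E -> k < size E -> l < size E ->
     (nth arc0 E i).2 = (nth arc0 E j).1 ->
     (nth arc0 E k).2 = (nth arc0 E l).1 ->
     c j = c k -> c i <> c l).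

Definition has_oriented_coloring (E : arcs) (r : nat) : Prop :=
  exists c, oriented_arc_coloring E r c.

Definition oriented_chromatic_index_le (E : arcs) (r : nat) : Prop :=
  exists r', r' <= r /\ has_oriented_coloring E r'.

(* Main.v *)
Require Import Defs.
From mathcomp Require Import all_boot.
Set Implicit Arguments. Unset Strict Implicit. Unset Printing Implicit Defensive.

Definition tarc (x y : nat) : bool :=
  (x < 7) && (y < 7) && ((y + 7 - x) %% 7 \in [:: 1; 2; 4]).

Definition midv (u v : nat) : nat := (u + 4 * ((v + 7 - u) %% 7)) %% 7.

Lemma midP u v : tarc u v -> tarc u (midv u v) && tarc (midv u v) v.
Proof.
rewrite /tarc /midv.
do 7?[case: u => [|u]]; do 7?[case: v => [|v]]; by vm_compute.
Qed.

Lemma tarc_lt u v : tarc u v -> (u < 7) /\ (v < 7).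
Proof. by rewrite /tarc => /andP [/andP [-> ->] _]. Qed.

Lemma tarc_asym u v : tarc u v -> tarc v u -> False.
Proof.
rewrite /tarc.
do 7?[case: u => [|u]]; do 7?[case: v => [|v]]; by vm_compute.
Qed.

Lemma tarc_neq u v : tarc u v -> u <> v.
Proof.
move=> h e; subst v; move: h; rewrite /tarc.
do 7?[case: u => [|u]]; by vm_compute.
Qed.

Lemma vertex_of_nth E i : i < size E ->
  vertex_of E (nth arc0 E i).1 /\ vertex_of E (nth arc0 E i).2.
Proof.
move=> hi; split; apply/hasP; exists (nth arc0 E i); rewrite ?mem_nth //= eqxx ?orbT //.
Qed.

Lemma vertex_of_cat E1 E2 x : vertex_of (E1 ++ E2) x = vertex_of E1 x || vertex_of E2 x.
Proof. by rewrite /vertex_of has_cat. Qed.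

Lemma cat_split (E1 E2 : arcs) i : i < size (E1 ++ E2) ->
  i < size E1 \/ exists k, k < size E2 /\ i = size E1 + k.
Proof.
rewrite size_cat => hi; case: (ltnP i (size E1)) => h; [by left|right].
exists (i - size E1); split; last by rewrite subnKC.
by rewrite -(ltn_add2l (size E1)) subnKC.
Qed.

Lemma nth_catL (E1 E2 : arcs) i : i < size E1 -> nth arc0 (E1 ++ E2) i = nth arc0 E1 i.
Proof. by move=> h; rewrite nth_cat h. Qed.

Lemma nth_catR (E1 E2 : arcs) k : nth arc0 (E1 ++ E2) (size E1 + k) = nth arc0 E2 k.
Proof. by rewrite nth_cat ltnNge leq_addr /= addKn. Qed.

Definition cc (c1 c2 : nat -> nat) n i := if i < n then c1 i else c2 (i - n).

Lemma ccL c1 c2 n i : i < n -> cc c1 c2 n i = c1 i.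
Proof. by move=> h; rewrite /cc h. Qed.

Lemma ccR c1 c2 n k : cc c1 c2 n (n + k) = c2 k.
Proof. by rewrite /cc ltnNge leq_addr /= addKn. Qed.

Lemma esp_struct E s t : esp E s t ->
  [/\ s <> t, vertex_of E s, vertex_of E t &
     forall i, i < size E -> (nth arc0 E i).2 <> s /\ (nth arc0 E i).1 <> t].
Proof.
elim=> {E s t}.
- move=> u v huv; split=> //=.
  + by rewrite eqxx.
  + by rewrite eqxx orbT.
  + by case=> //= _; split=> e; apply: huv.
- move=> E1 E2 s t _ [h1 h2 h3 h4] _ [g1 g2 g3 g4] hd; split=> //.
  + by rewrite vertex_of_cat h2.
  + by rewrite vertex_of_cat h3.
  + move=> i /cat_split [hi|[k [hk ->]]].
      by rewrite nth_catL //; apply: h4.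
    by rewrite nth_catR; apply: g4.
- move=> E1 E2 s m t _ [h1 h2 h3 h4] _ [g1 g2 g3 g4] hd; split.
  + by move=> e; subst t; apply: h1; apply: hd.
  + by rewrite vertex_of_cat h2.
  + by rewrite vertex_of_cat g3 orbT.
  + move=> i /cat_split [hi|[k [hk ->]]].
      rewrite nth_catL //; split; first by case: (h4 i hi).
      move=> e; apply: g1; have [v1 _] := vertex_of_nth hi.
      by rewrite e in v1; rewrite (hd _ v1 g3).
    rewrite nth_catR; split; last by case: (g4 k hk).
    move=> e; apply: h1; have [_ v2] := vertex_of_nth hk.
    by rewrite e in v2; rewrite (hd _ h2 v2).
Qed.

Definition good (E : arcs) s t := forall u v, tarc u v -> exists c : nat -> nat,
 [/\ (forall i, i < size E -> c i < 7),
     (forall i j, i < size E -> j < size E ->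
        (nth arc0 E i).2 = (nth arc0 E j).1 -> tarc (c i) (c j)),
     (forall i, i < size E -> (nth arc0 E i).1 = s -> tarc u (c i)) &
     (forall i, i < size E -> (nth arc0 E i).2 = t -> c i = v)].

Lemma esp_good E s t : esp E s t -> good E s t.
Proof.
elim=> {E s t}.
- move=> u v huv a b hab; exists (fun _ => b); split.
  + by move=> i _; case: (tarc_lt hab).
  + by case=> // [] [] // _ _ /= e; case: huv.
  + by move=> i _ _.
  + by [].
- move=> E1 E2 s t H1 IH1 H2 IH2 hd u v huv.
  have [h1 h2 h3 h4] := esp_struct H1.
  have [g1 g2 g3 g4] := esp_struct H2.
  have [c1 [a1 a2 a3 a4]] := IH1 u v huv.
  have [c2 [b1 b2 b3 b4]] := IH2 u v huv.
  exists (cc c1 c2 (size E1)); split.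
  + move=> i /cat_split [hi|[k [hk ->]]]; first by rewrite ccL // a1.
    by rewrite ccR b1.
  + move=> i j /cat_split [hi|[k [hk ->]]] /cat_split [hj|[l [hl ->]]].
    * by rewrite !nth_catL // !ccL //; apply: a2.
    * rewrite nth_catL // nth_catR => e; exfalso.
      have [_ v1] := vertex_of_nth hi; have [v2 _] := vertex_of_nth hl.
      rewrite e in v1; case: (hd _ v1 v2) => e'.
        by case: (h4 i hi); rewrite e e'.
      by case: (g4 l hl); rewrite e'.
    * rewrite nth_catR (nth_catL _ hj) => e; exfalso.
      have [_ v1] := vertex_of_nth hk; have [v2 _] := vertex_of_nth hj.
      rewrite e in v1; case: (hd _ v2 v1) => e'.
        by case: (g4 k hk); rewrite e e'.
      by case: (h4 j hj); rewrite e'.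
    * by rewrite !nth_catR !ccR; apply: b2.
  + move=> i /cat_split [hi|[k [hk ->]]].
      by rewrite nth_catL // ccL //; apply: a3.
    by rewrite nth_catR ccR; apply: b3.
  + move=> i /cat_split [hi|[k [hk ->]]].
      by rewrite nth_catL // ccL //; apply: a4.
    by rewrite nth_catR ccR; apply: b4.
- move=> E1 E2 s m t H1 IH1 H2 IH2 hd u v huv.
  have [h1 h2 h3 h4] := esp_struct H1.
  have [g1 g2 g3 g4] := esp_struct H2.
  have /andP [huw hwv] := midP huv.
  have [c1 [a1 a2 a3 a4]] := IH1 u (midv u v) huw.
  have [c2 [b1 b2 b3 b4]] := IH2 (midv u v) v hwv.
  exists (cc c1 c2 (size E1)); split.
  + move=> i /cat_split [hi|[k [hk ->]]]; first by rewrite ccL // a1.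
    by rewrite ccR b1.
  + move=> i j /cat_split [hi|[k [hk ->]]] /cat_split [hj|[l [hl ->]]].
    * by rewrite !nth_catL // !ccL //; apply: a2.
    * rewrite nth_catL // nth_catR => e.
      have [_ v1] := vertex_of_nth hi; have [v2 _] := vertex_of_nth hl.
      rewrite e in v1; have e' := hd _ v1 v2.
      rewrite ccL // ccR (a4 i hi) ?e //; exact: b3.
    * rewrite nth_catR (nth_catL _ hj) => e; exfalso.
      have [_ v1] := vertex_of_nth hk; have [v2 _] := vertex_of_nth hj.
      rewrite e in v1; have e' := hd _ v2 v1.
      by case: (g4 k hk); rewrite e e'.
    * by rewrite !nth_catR !ccR; apply: b2.
  + move=> i /cat_split [hi|[k [hk ->]]].
      by rewrite nth_catL // ccL //; apply: a3.
    rewrite nth_catR => e; exfalso; apply: h1.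
    have [v1 _] := vertex_of_nth hk; rewrite e in v1; exact: hd.
  + move=> i /cat_split [hi|[k [hk ->]]].
      rewrite nth_catL // => e; exfalso; apply: g1.
      have [_ v1] := vertex_of_nth hi; rewrite e in v1; apply/esym; exact: hd.
    by rewrite nth_catR ccR; apply: b4.
Qed.

Theorem mainTheorem6 (E : arcs) (s t : nat) :
  esp E s t -> oriented_chromatic_index_le E 7.
Proof.
move=> H; have [c [a1 a2 _ _]] := esp_good H (u:=0) (v:=1) erefl.
exists 7; split=> //; exists (fun i => (c i).+1); split; [|split].
- by move=> i hi; rewrite ltn0Sn ltnS; exact: a1.
- by move=> i j hi hj e [] /(tarc_neq (a2 i j hi hj e)).
- move=> i j k l hi hj hk hl e1 e2 [] ejk [] eil.
  apply: (tarc_asym (a2 i j hi hj e1)).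
  by rewrite ejk eil; exact: a2.
Qed.
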